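(* Let $(T_1,T_2,T_3)$ be an associative Clifford extension over $(V,S^0,S^1)$ with $\dim V>1$ and $\dim S^0\ge4$. Then there exist pairwise orthogonal nonzero vectors $e_1,e_2,e_3,e_4\in S^0$ such that $e_1(e_2t)=e_3(e_4t)$ for all $t\in T_2$, i.e. the elements $e_1e_2,e_3e_4\in\mathrm{Cl}(S^0)$ act identically on $T_2$.
   Context: All spaces are finite-dimensional real Euclidean. For a Euclidean space $X$, $\mathrm{Cl}(X)$ is the Clifford algebra with $x\cdot x=-|x|^2$; a ''$\mathrm{Cl}(X)$-module $Y\oplus Z$'' is a $\mathbb Z/2$-graded module with $X\cdot Y\subset Z$, $X\cdot Z\subset Y$, $Y\perp Z$, each $x\in X$ acting skew-symmetrically; the action is written $xy$. Let $V\neq0$ be Euclidean and $S^0\oplus S^1$ a nonzero $\mathrm{Cl}(V)$-module. A Clifford extension over $(V,S^0,S^1)$ is a triple of Euclidean spaces $T_1,T_2,T_3$ of equal dimension together with a $\mathrm{Cl}(V)$-module structure on $T_2\oplus T_3$, a $\mathrm{Cl}(S^0)$-module structure on $T_1\oplus T_2$, and a $\mathrm{Cl}(S^1)$-module structure on $T_1\oplus T_3$. It is associative if $(vs^0)t_1=v(s^0t_1)$ for all $v\in V,s^0\in S^0,t_1\in T_1$. *)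

(* Defs.v *)
(* Euclidean spaces of dimension n are modelled as 'rV[R]_n
   with the standard inner product, R : realType (the real numbers). *)
From HB Require Import structures.
From mathcomp Require Import all_boot all_order all_algebra.
From mathcomp Require Import reals.
Set Implicit Arguments. Unset Strict Implicit. Unset Printing Implicit Defensive.
Import Order.TTheory GRing.Theory Num.Theory.
Local Open Scope ring_scope.

Definition dotv (R : realType) (n : nat) (u v : 'rV[R]_n) : R :=
  \sum_(i < n) u ord0 i * v ord0 i.

(* A Z/2-graded Cl(X)-module Y (+) Z, with X = R^n, Y = R^p, Z = R^q
   (Y and Z orthogonal summands), given by the actions
   ayz : X -> Y -> Z  and  azy : X -> Z -> Y  (x y and x z).
   Conditions: the action is linear in x (restriction of an algebra map
   Cl(X) -> End(Y (+) Z) to X) and in the module element; each x acts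
   skew-symmetrically on Y (+) Z; and x.x = -|x|^2. *)
Definition is_cl_module (R : realType) (n p q : nat)
  (ayz : 'rV[R]_n -> 'rV[R]_p -> 'rV[R]_q)
  (azy : 'rV[R]_n -> 'rV[R]_q -> 'rV[R]_p) : Prop :=
  [/\ (forall (a : R) x x' y, ayz (a *: x + x') y = a *: ayz x y + ayz x' y),
      (forall (a : R) x x' z, azy (a *: x + x') z = a *: azy x z + azy x' z),
      (forall x (a : R) y y', ayz x (a *: y + y') = a *: ayz x y + ayz x y'),
      (forall x (a : R) z z', azy x (a *: z + z') = a *: azy x z + azy x z') &
      (forall x y z, dotv (ayz x y) z = - dotv y (azy x z))] /\
  [/\
      (forall x y, azy x (ayz x y) = - (dotv x x) *: y) &
      (forall x z, ayz x (azy x z) = - (dotv x x) *: z)].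

(* Main.v *)
Require Import Defs.
From HB Require Import structures.
From mathcomp Require Import all_boot all_order all_algebra.
From mathcomp Require Import reals.
From mathcomp Require Import lra.
Import Order.TTheory GRing.Theory Num.Theory.
From mathcomp Require Import zify.
Local Open Scope ring_scope.
Set Implicit Arguments.
Section Aux.
Context {R : realType}.

Lemma dotvC n (u v : 'rV[R]_n) : dotv u v = dotv v u.
Proof. by rewrite /dotv; apply: eq_bigr => i _; rewrite mulrC. Qed.

Lemma dotvDl n (a : R) (x y z : 'rV[R]_n) :
  dotv (a *: x + y) z = a * dotv x z + dotv y z.
Proof.
rewrite /dotv mulr_sumr -big_split /=; apply: eq_bigr => i _.
by rewrite !mxE mulrDl mulrA.
Qed.

Lemma dotvDr n (a : R) (x y z : 'rV[R]_n) :
  dotv z (a *: x + y) = a * dotv z x + dotv z y.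
Proof. by rewrite dotvC dotvDl (dotvC x) (dotvC y). Qed.

Lemma dotv0l n (z : 'rV[R]_n) : dotv 0 z = 0.
Proof. by rewrite /dotv big1 // => i _; rewrite mxE mul0r. Qed.

Lemma dotv0r n (z : 'rV[R]_n) : dotv z 0 = 0.
Proof. by rewrite dotvC dotv0l. Qed.

Lemma dotvZl n (a : R) (x z : 'rV[R]_n) : dotv (a *: x) z = a * dotv x z.
Proof. by have := dotvDl a x 0 z; rewrite addr0 dotv0l addr0. Qed.

Lemma dotvZr n (a : R) (x z : 'rV[R]_n) : dotv z (a *: x) = a * dotv z x.
Proof. by rewrite dotvC dotvZl dotvC. Qed.

Lemma dotvAl n (x y z : 'rV[R]_n) : dotv (x + y) z = dotv x z + dotv y z.
Proof. by have := dotvDl 1 x y z; rewrite scale1r mul1r. Qed.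

Lemma dotvAr n (x y z : 'rV[R]_n) : dotv z (x + y) = dotv z x + dotv z y.
Proof. by rewrite dotvC dotvAl !(dotvC z). Qed.

Lemma dotvNl n (x z : 'rV[R]_n) : dotv (- x) z = - dotv x z.
Proof. by rewrite -scaleN1r dotvZl mulN1r. Qed.

Lemma dotvNr n (x z : 'rV[R]_n) : dotv z (- x) = - dotv z x.
Proof. by rewrite dotvC dotvNl dotvC. Qed.

Lemma dotv_eq0 n (x : 'rV[R]_n) : dotv x x = 0 -> x = 0.
Proof.
move=> H; apply/rowP => i; rewrite !mxE.
have := (@psumr_eq0P _ _ xpredT (fun k => x ord0 k * x ord0 k) (fun k _ => sqr_ge0 (x ord0 k)) H i isT).
by move/eqP; rewrite mulf_eq0 orbb => /eqP.
Qed.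

Lemma dotv_ext n (x y : 'rV[R]_n) : (forall z, dotv z x = dotv z y) -> x = y.
Proof.
move=> H; apply/eqP; rewrite -subr_eq0; apply/eqP/dotv_eq0.
by rewrite dotvAr dotvNr H subrr.
Qed.

Lemma dotv_delta n (i j : 'I_n) :
  dotv (delta_mx 0 i) (delta_mx 0 j) = (i == j)%:R :> R.
Proof.
rewrite /dotv (bigD1 i) //= big1 => [|k /negbTE kn].
  by rewrite !mxE !eqxx /= addr0 mul1r eq_sym.
by rewrite !mxE kn /= mul0r.
Qed.

Lemma delta_neq0 n (i : 'I_n) : delta_mx 0 i != 0 :> 'rV[R]_n.
Proof.
apply/negP => /eqP H; have := congr1 (fun M : 'rV[R]_n => M ord0 i) H.
by rewrite !mxE !eqxx /= => /eqP; rewrite oner_eq0.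
Qed.

Lemma lin1_0 p q r (f : 'rV[R]_p -> 'rV[R]_q -> 'rV[R]_r)
  (H : forall (a : R) x x' y, f (a *: x + x') y = a *: f x y + f x' y) y :
  f 0 y = 0.
Proof.
have := H 1 0 0 y; rewrite !scale1r addr0 => /eqP.
by rewrite -subr_eq0 opprD addrA subrr add0r oppr_eq0 => /eqP.
Qed.

Lemma lin1_Z p q r (f : 'rV[R]_p -> 'rV[R]_q -> 'rV[R]_r)
  (H : forall (a : R) x x' y, f (a *: x + x') y = a *: f x y + f x' y) a x y :
  f (a *: x) y = a *: f x y.
Proof. by have := H a x 0 y; rewrite addr0 (lin1_0 _ H) addr0. Qed.

Lemma lin1_D p q r (f : 'rV[R]_p -> 'rV[R]_q -> 'rV[R]_r)
  (H : forall (a : R) x x' y, f (a *: x + x') y = a *: f x y + f x' y) x x' y :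
  f (x + x') y = f x y + f x' y.
Proof. by have := H 1 x x' y; rewrite !scale1r. Qed.

Lemma lin2_Z p q r (f : 'rV[R]_p -> 'rV[R]_q -> 'rV[R]_r)
  (H : forall x (a : R) y y', f x (a *: y + y') = a *: f x y + f x y') x a y :
  f x (a *: y) = a *: f x y.
Proof.
have f0 : f x 0 = 0.
  have := H x 1 0 0; rewrite !scale1r addr0 => /eqP.
  by rewrite -subr_eq0 opprD addrA subrr add0r oppr_eq0 => /eqP.
by have := H x a y 0; rewrite addr0 f0 addr0.
Qed.

Lemma lin2_D p q r (f : 'rV[R]_p -> 'rV[R]_q -> 'rV[R]_r)
  (H : forall x (a : R) y y', f x (a *: y + y') = a *: f x y + f x y') x y y' :
  f x (y + y') = f x y + f x y'.
Proof. by have := H x 1 y y'; rewrite !scale1r. Qed.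

Lemma dotv_neq0 n (x : 'rV[R]_n) : x != 0 -> dotv x x != 0.
Proof. by move=> xn; apply/eqP => /dotv_eq0 /eqP; rewrite (negbTE xn). Qed.

Lemma ker_exists n (a b : 'rV[R]_n) : (2 < n)%N ->
  exists u : 'rV[R]_n, u != 0 /\ dotv a u = 0 /\ dotv b u = 0.
Proof.
move=> n2.
pose A : 'M[R]_(n, 1 + 1) := row_mx a^T b^T.
pose K := kermx A.
have rK : (0 < \rank K)%N.
  rewrite /K mxrank_ker; have := rank_leq_col A; move: (\rank A) => k; clear -n2; lia.
have [i Hi] : exists i, row i K != 0.
  case: (pickP (fun i => row i K != 0)) => [i Hi|H]; first by exists i.
  suff K0 : K = 0 by move: rK; rewrite K0 mxrank0.
  apply/row_matrixP => i; rewrite row0; move: (H i) => /= /negbFE /eqP //.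
exists (row i K); split => //.
have : row i K *m A = 0 by apply/sub_kermxP; rewrite (submx_trans (row_sub i K)).
rewrite mul_mx_row => /eqP; rewrite -row_mx0 => /eqP /eq_row_mx [Ha Hb].
have dE (c : 'rV[R]_n) : dotv c (row i K) = (row i K *m c^T) 0 0.
  rewrite /dotv mxE; apply: eq_bigr => k _; rewrite !mxE mulrC; congr (_ * c _ _); exact: val_inj.
by rewrite !dE Ha Hb !mxE.
Qed.

End Aux.

Theorem mainTheorem8 (R : realType) (nV n0 n1 m : nat)
  (vS0 : 'rV[R]_nV -> 'rV[R]_n0 -> 'rV[R]_n1)
  (vS1 : 'rV[R]_nV -> 'rV[R]_n1 -> 'rV[R]_n0)
  (vT2 : 'rV[R]_nV -> 'rV[R]_m -> 'rV[R]_m)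
  (vT3 : 'rV[R]_nV -> 'rV[R]_m -> 'rV[R]_m)
  (sT1 : 'rV[R]_n0 -> 'rV[R]_m -> 'rV[R]_m)
  (sT2 : 'rV[R]_n0 -> 'rV[R]_m -> 'rV[R]_m)
  (uT1 : 'rV[R]_n1 -> 'rV[R]_m -> 'rV[R]_m)
  (uT3 : 'rV[R]_n1 -> 'rV[R]_m -> 'rV[R]_m) :
  (0 < n0 + n1)%N ->
  is_cl_module vS0 vS1 ->
  is_cl_module vT2 vT3 ->
  is_cl_module sT1 sT2 ->
  is_cl_module uT1 uT3 ->
  (forall v s t, uT1 (vS0 v s) t = vT2 v (sT1 s t)) ->
  (1 < nV)%N -> (4 <= n0)%N ->
  exists e1 e2 e3 e4 : 'rV[R]_n0,
    [/\ e1 != 0, e2 != 0, e3 != 0 & e4 != 0] /\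
    [/\ dotv e1 e2 = 0, dotv e1 e3 = 0 & dotv e1 e4 = 0] /\
    [/\ dotv e2 e3 = 0, dotv e2 e4 = 0 & dotv e3 e4 = 0] /\
    (forall t : 'rV[R]_m, sT1 e1 (sT2 e2 t) = sT1 e3 (sT2 e4 t)).
Proof.
move=> _ [[S1l S2l S3l S4l Sskew] [SJ1 SJ2]] [[T1l T2l T3l T4l Tskew] [TJ1 TJ2]]
  [[s1l s2l s3l s4l sskew] [sJ1 sJ2]] [[u1l u2l u3l u4l uskew] [uJ1 uJ2]]
  Hassoc HnV Hn0.
pose v1 : 'rV[R]_nV := delta_mx 0 (Ordinal (ltnW HnV)).
pose v2 : 'rV[R]_nV := delta_mx 0 (Ordinal HnV).
have d11 : dotv v1 v1 = 1 by rewrite dotv_delta eqxx.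
have d22 : dotv v2 v2 = 1 by rewrite dotv_delta eqxx.
have d12 : dotv v1 v2 = 0 by rewrite dotv_delta.
pose J s := vS1 v1 (vS0 v2 s).
pose JT x := vT3 v2 (vT2 v1 x).
have normS x s : dotv (vS0 x s) (vS0 x s) = dotv x x * dotv s s.
  by rewrite Sskew SJ1 dotvZr mulNr opprK.
have X0 s : dotv (vS0 v1 s) (vS0 v2 s) = 0.
  have := normS (v1 + v2) s.
  rewrite (lin1_D _ S1l) dotvAl !dotvAr normS normS (dotvC (vS0 v2 s)).
  rewrite !dotvAl d11 d22 d12 (dotvC v2) d12; lra.
have Xab a b : dotv (vS0 v1 a) (vS0 v2 b) = - dotv (vS0 v1 b) (vS0 v2 a).
  have := X0 (a + b); rewrite !(lin2_D _ S3l) dotvAl !dotvAr X0 X0; lra.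
have JA a b : dotv a (J b) = - dotv (vS0 v1 a) (vS0 v2 b).
  by rewrite /J Sskew opprK.
have JA' a b : dotv (vS0 v1 a) (vS0 v2 b) = - dotv a (J b).
  by rewrite JA opprK.
have Jperp s : dotv s (J s) = 0 by rewrite JA X0 oppr0.
have JJ a b : dotv (J a) (J b) = dotv a b.
  rewrite JA {1}/J SJ2 d11 dotvZl Sskew SJ1 d22 dotvZr; lra.
have K1 s t1 : sT1 (J s) t1 = vT3 v1 (vT2 v2 (sT1 s t1)).
  have E := Hassoc v1 (J s) t1.
  rewrite {1}/J SJ2 d11 (lin1_Z _ u1l) Hassoc in E.
  have := congr1 (vT3 v1) E; rewrite TJ1 d11 (lin2_Z _ T4l) !scaleN1r.
  by move/oppr_inj.
have K2 s t2 : sT2 (J s) t2 = sT2 s (JT t2).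
  apply: dotv_ext => t1.
  have sk' x y z : dotv y (sT2 x z) = - dotv (sT1 x y) z by rewrite sskew opprK.
  have tk' x y z : dotv y (vT3 x z) = - dotv (vT2 x y) z by rewrite Tskew opprK.
  rewrite !sk' K1; congr (- _).
  rewrite dotvC tk' dotvC Tskew opprK //.
have C e t : sT1 e (sT2 (J e) t) = - dotv e e *: JT t by rewrite K2 sJ2.
have n00 : (0 < n0)%N by apply: leq_trans Hn0.
pose e1 : 'rV[R]_n0 := delta_mx 0 (Ordinal n00).
have e1n : e1 != 0 by apply: delta_neq0.
have [e3 [e3n [h13 h23]]] := ker_exists e1 (J e1) (leq_trans (isT : (2 < 4)%N) Hn0).
pose c := dotv e1 e1 / dotv e3 e3.
have Jn e : e != 0 -> J e != 0.
  move=> en; apply/eqP => H; have := JJ e e; rewrite H dotv0l => /esym/eqP.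
  by rewrite (negbTE (dotv_neq0 _ en)).
have cn : c != 0 by rewrite mulf_neq0 ?invr_neq0 // dotv_neq0.
exists e1, (J e1), e3, (c *: J e3).
split; first by split => //; [exact: Jn | rewrite scaler_eq0 negb_or cn Jn].
split; first split => //.
  by rewrite dotvZr JA Xab opprK JA' dotvC h23 oppr0 mulr0.
split; first split => //.
  - by rewrite dotvZr JJ h13 mulr0.
  - by rewrite dotvZr Jperp mulr0.
move=> t; rewrite C (lin1_Z _ s2l) (lin2_Z _ s3l) C scalerA.
by rewrite mulrN divfK // dotv_neq0.
Qed.
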